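(* Let $k\ge 1$, let $z_1,\dots,z_k\in\mathbb{C}$ be pairwise distinct with $|z_j|\le 1$ and $z_j\neq 1$ for $j=1,\dots,k$, and let $n\ge 1$ and $n_1,\dots,n_k\ge 1$ be integers. Let $$p(z)=(z-1)^n\prod_{j=1}^{k}(z-z_j)^{n_j},\quad z\in\mathbb{C},$$ and set $m=n+\sum_{j=1}^k n_j$. Then there exists $\zeta\neq 1$ such that $p'(\zeta)=0$ and $$\Big|\zeta-\frac{m-n}{m+(k-1)n}\Big|\le \frac{kn}{m+(k-1)n}.$$ *)

(* Defs.v *)
(* Complex numbers are modelled as R[i] = complex R
   (mathcomp-real-closed) for R : realType (MathComp-Analysis reals);
   with R the classical reals this is exactly C. *)
From HB Require Import structures.
From mathcomp Require Import all_boot all_order all_algebra.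
From mathcomp Require Import complex.
From mathcomp Require Import reals.
Set Implicit Arguments. Unset Strict Implicit. Unset Printing Implicit Defensive.
Import Order.TTheory GRing.Theory Num.Theory.
Local Open Scope ring_scope.

Definition pol (R : realType) (k n : nat) (z : 'I_k -> R[i]) (nn : 'I_k -> nat)
  : {poly R[i]} :=
  ('X - 1) ^+ n * \prod_(j < k) ('X - (z j)%:P) ^+ (nn j).

(* Main.v *)
Require Import Defs.
From HB Require Import structures.
From mathcomp Require Import all_boot all_order all_algebra.
From mathcomp Require Import complex.
From mathcomp Require Import reals.
From mathcomp Require Import ring lra zify.
Import Order.TTheory GRing.Theory Num.Theory.
Local Open Scope ring_scope.

Lemma L1 (F : fieldType) (I : Type) (s : seq I) (G : I -> {poly F}) (w : F) :
  (forall i, (G i).[w] != 0) ->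
  (\prod_(i <- s) G i)^`().[w] = (\prod_(i <- s) G i).[w] * \sum_(i <- s) (G i)^`().[w] / (G i).[w].
Proof.
move=> hG; elim: s => [|a s IH]; first by rewrite !big_nil -polyC1 derivC horner0 mulr0.
rewrite !big_cons derivM hornerD !hornerM IH mulrDr.
have := hG a; set g := (G a).[w]; set P := (\prod_(j <- s) G j).[w] => hg.
congr (_ + _); last by rewrite mulrA.
by rewrite [RHS]mulrC mulrA divfK.
Qed.

Lemma L2 (R : realDomainType) (T : eqType) (f : T -> R) (xs : seq T) (a : R) :
  xs != [::] -> (forall x, x \in xs -> f x < a) -> \sum_(x <- xs) f x < (size xs)%:R * a.
Proof.
elim: xs => [//|b xs IH] _ h.
rewrite big_cons /= -add1n natrD mulrDl mul1r.
case: (eqVneq xs [::]) => [->|hne].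
  by rewrite big_nil /= mul0r !addr0; apply: h; rewrite mem_head.
apply: ltrD; first by apply: h; rewrite mem_head.
by apply: IH => // x hx; apply: h; rewrite in_cons hx orbT.
Qed.

Section CS.
Local Open Scope complex_scope.

Lemma L3 (R : realType) (z : R[i]) : `|z| <= 1 -> z != 1 -> 1/2 <= complex.Re ((1 - z)^-1).
Proof.
case: z => a b; rewrite normc_def -[1 : R[i]]/(1%:C) lecR /= => hn hne.
have hs : a^+2 + b^+2 <= 1.
  have h0 : 0 <= a^+2 + b^+2 by rewrite addr_ge0 // sqr_ge0.
  by rewrite -(sqr_sqrtr h0) exprn_ile1 // sqrtr_ge0.
set d := (1 - a)^+2 + (0 - b)^+2.
have hd : 0 < d.
  rewrite lt_def /d addr_ge0 ?sqr_ge0 // andbT paddr_eq0 ?sqr_ge0 //.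
  rewrite !sqrf_eq0 subr_eq0 sub0r oppr_eq0; apply: contra hne => /andP[/eqP <- /eqP ->].
  done.
rewrite ler_pdivlMr // /d; lra.
Qed.

Lemma L4 (R : realType) (u : R[i]) (r : R) : 0 < r -> 1 <= 2 * r * complex.Re u -> `|r%:C - u^-1| <= r%:C.
Proof.
case: u => x y /= hr hx.
have xpos : 0 < x.
  rewrite ltNge; apply/negP => hx0.
  have : 2 * r * x <= 0 by rewrite pmulr_rle0 // mulr_gt0.
  lra.
set d := x^+2 + y^+2.
have hd : 0 < d by have := sqr_ge0 y; have := exprn_gt0 2 xpos; rewrite /d; lra.
rewrite (normc_def (r%:C - (x +i* y)^-1)) lecR /=.
rewrite -{2}(ger0_norm (ltW hr)) -sqrtr_sqr; apply: ler_wsqrtr; rewrite -/d.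
have e1 : (x / d) ^+ 2 + (y / d) ^+ 2 = d^-1.
  rewrite /d; field; rewrite -/d; exact: lt0r_neq0.
have e2 : d^-1 <= 2 * r * (x / d).
  by rewrite mulrA -[leLHS]mul1r ler_pM2r ?invr_gt0.
have -> : (r - x / d) ^+ 2 + (0 - - (y / d)) ^+ 2 = r^+2 - 2 * r * (x / d) + ((x / d) ^+ 2 + (y / d) ^+ 2).
  by ring.
rewrite e1; lra.
Qed.

Lemma size_ie k : size (index_enum 'I_k) = k.
Proof. by rewrite [index_enum _]unlock -enumT size_enum_ord. Qed.

Lemma ReS (R : realType) (I : Type) (r : seq I) (F : I -> R[i]) :
  complex.Re (\sum_(i <- r) F i) = \sum_(i <- r) complex.Re (F i).
Proof. by rewrite raddf_sum. Qed.

Lemma ReN (R : realType) (a : nat) (x : R[i]) : complex.Re (a%:R * x) = a%:R * complex.Re x.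
Proof. by rewrite !mulr_natl raddfMn. Qed.

Lemma Cnat (R : realType) (a b : nat) : ((a%:R / b%:R : R)%:C : R[i]) = a%:R / b%:R.
Proof. by rewrite rmorphM fmorphV /= !rmorph_nat. Qed.
Lemma ReD (R : realType) (x y : R[i]) : complex.Re (x + y) = complex.Re x + complex.Re y.
Proof. by move: x y => [a b] [c d]. Qed.
End CS.

Theorem theorem1 (R : realType) (k n : nat) (z : 'I_k -> R[i]) (nn : 'I_k -> nat)
  (hk : (1 <= k)%N) (hn : (1 <= n)%N) (hnn : forall j, (1 <= nn j)%N)
  (hinj : injective z) (hz1 : forall j, `|z j| <= 1) (hzne : forall j, z j != 1) :
  let m := (n + \sum_(j < k) nn j)%N in
  exists zeta : R[i], zeta != 1 /\ (pol n z nn)^`().[zeta] = 0 /\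
    `|zeta - (m - n)%N%:R / (m + (k - 1) * n)%N%:R| <= (k * n)%N%:R / (m + (k - 1) * n)%N%:R.
Proof.
move=> m.
set N := (\sum_(j < k) nn j)%N.
pose v j := (1 - z j)^-1.
have hz1' j : 1 - z j != 0 by rewrite subr_eq0 eq_sym.
have hv0 j : v j != 0 by rewrite invr_eq0.
have hvinj : injective v.
  move=> i j /invr_inj /addrI /oppr_inj; exact: hinj.
have nat0 (a : nat) : (0 < a)%N -> (a%:R : R[i]) != 0 by move=> ha; rewrite pnatr_eq0 -lt0n.
pose P := \prod_(i < k) ('X - (v i)%:P).
pose Q j := \prod_(i < k | i != j) ('X - (v i)%:P).
pose c j := ((nn j)%:R * v j : R[i]).
pose S2 := \sum_(j < k) c j *: Q j.
pose s := n%:R *: P - S2.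
have sP : size P = k.+1 by rewrite size_prod_XsubC size_ie.
have PQ j : P = ('X - (v j)%:P) * Q j by rewrite /P (bigD1 j).
have mQ j : Q j \is monic by apply: monic_prod_XsubC.
have sQ j : size (Q j) = k.
  have := sP; rewrite (PQ j) size_mul ?polyXsubC_eq0 ?monic_neq0 ?mQ // size_XsubC.
  by move=> [].
have sS2 : (size S2 <= k)%N.
  rewrite /S2; apply: (big_ind (fun p : {poly R[i]} => (size p <= k)%N)).
  - by rewrite size_poly0.
  - move=> p q hp hq; apply: leq_trans (size_polyD _ _) _; by rewrite geq_max hp hq.
  - by move=> j _; rewrite (leq_trans (size_scale_leq _ _)) ?sQ.
have snP : size (n%:R *: P) = k.+1 by rewrite size_scale ?nat0.
have ss : size s = k.+1 by rewrite /s size_polyDl ?snP // size_polyN ltnS.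
have ls : lead_coef s = n%:R.
  by rewrite /s lead_coefDl ?snP ?size_polyN ?ltnS // lead_coefZ (monicP (monic_prod_XsubC _ _ _)) mulr1.
have cs : s`_k.-1 = - (n%:R * \sum_(j<k) v j) - \sum_(j<k) c j.
  rewrite /s coefB coefZ coef_sum.
  have -> : P`_k.-1 = - \sum_(j<k) v j.
    rewrite /P -(big_map v xpredT (fun x => 'X - x%:P)).
    have := @coefPn_prod_XsubC _ (map v (index_enum 'I_k)); rewrite size_map size_ie => -> ; last by rewrite -lt0n.
    by rewrite big_map.
  congr (_ - _); first by rewrite mulrN.
  apply: eq_bigr => j _; rewrite coefZ.
  have -> : (Q j)`_k.-1 = lead_coef (Q j) by rewrite lead_coefE sQ.
  by rewrite (monicP (mQ j)) mulr1.
have [us hus] := closed_field_poly_normal s.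
rewrite ls in hus.
have sus : size us = k.
  by have := ss; rewrite hus size_scale ?nat0 // size_prod_XsubC => -[].
have E : n%:R * \sum_(u <- us) u = n%:R * \sum_(j<k) v j + \sum_(j<k) c j.
  have h := coefPn_prod_XsubC (ps := us); rewrite sus -lt0n in h.
  move: cs; rewrite hus coefZ h // mulrN => /eqP; rewrite -opprD eqr_opp => /eqP.
  done.
set D := (k * n + N)%N.
have knpos : (0 < k * n)%N by rewrite muln_gt0 hk hn.
have Dpos : (0 < D)%N by rewrite /D addn_gt0 knpos.
pose t := (D%:R / (2 * (k * n)%:R) : R).
have HR : (D%:R / 2 : R) <= n%:R * \sum_(u <- us) complex.Re u.
  have := congr1 (@complex.Re R) E; rewrite ReN ReS => ->.
  rewrite ReD ReN ReS ReS.
  rewrite [X in _ <= _ + X](eq_bigr (fun j => (nn j)%:R * complex.Re (v j))); last by move=> j _; rewrite ReN.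
  have h1 : (k%:R / 2 : R) <= \sum_(j<k) complex.Re (v j).
    have : \sum_(j<k) (1/2 : R) <= \sum_(j<k) complex.Re (v j) by apply: ler_sum => j _; exact: L3.
    by rewrite sumr_const card_ord => h; apply: le_trans h; rewrite -[1/2 *+ k]mulr_natl; lra.
  have h2 : (N%:R / 2 : R) <= \sum_(j<k) (nn j)%:R * complex.Re (v j).
    have : \sum_(j<k) ((nn j)%:R * (1/2) : R) <= \sum_(j<k) (nn j)%:R * complex.Re (v j).
      by apply: ler_sum => j _; apply: ler_wpM2l => //; exact: L3.
    by rewrite /N natr_sum mulr_suml; under eq_bigr do rewrite mul1r.
  have hn0 : (0 : R) <= n%:R by [].
  rewrite /D natrD natrM; nra.
have knR : (0 : R) < (k * n)%:R by rewrite ltr0n.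
have DR : (0 : R) < D%:R by rewrite ltr0n.
have nR : (0 : R) < n%:R by rewrite ltr0n.
have kR : (0 : R) < k%:R by rewrite ltr0n.
have tpos : 0 < t by rewrite /t divr_gt0 // mulr_gt0.
have [u hu htu] : exists2 u, u \in us & t <= complex.Re u.
  case: (boolP (has (fun u => t <= complex.Re u) us)) => [/hasP [u] ? ? | /hasPn hall]; first by exists u.
  exfalso.
  have hne : us != [::] by rewrite -size_eq0 sus -lt0n.
  have hyp : forall x, x \in us -> complex.Re x < t by move=> x /hall; rewrite ltNge.
  have := @L2 _ _ (fun u => complex.Re u) us t hne hyp; rewrite sus => hlt.
  have : n%:R * \sum_(u <- us) complex.Re u < n%:R * (k%:R * t) by rewrite ltr_pM2l.
  have -> : n%:R * (k%:R * t) = D%:R / 2.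
    by rewrite /t natrM; field; rewrite !lt0r_neq0.
  move: HR; lra.
have u0 : u != 0.
  by apply/eqP => u0; move: htu; rewrite u0 /=; move: tpos; lra.
have su : s.[u] = 0.
  have /rootP h0 : root (\prod_(a <- us) ('X - a%:P)) u by rewrite root_prod_XsubC.
  by rewrite hus hornerZ h0 mulr0.
have hs x : s.[x] = n%:R * \prod_(i<k) (x - v i) - \sum_(j<k) c j * \prod_(i < k | i != j) (x - v i).
  rewrite /s hornerD hornerN hornerZ /P horner_prod /S2 horner_sum.
  under eq_bigr do rewrite hornerXsubC.
  congr (_ - _); apply: eq_bigr => j _.
  by rewrite hornerZ /Q horner_prod; under eq_bigr do rewrite hornerXsubC.
have vv j i : i != j -> v j - v i != 0.
  by move=> hij; rewrite subr_eq0; apply/eqP => /hvinj e; rewrite e eqxx in hij.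
have uv j : u != v j.
  apply/eqP => e.
  have : s.[v j] != 0.
    rewrite hs [\prod_(i<k) _](bigD1 j) //= subrr mul0r mulr0 sub0r oppr_eq0.
    rewrite [\sum_(_<k) _](bigD1 j) //= [X in _ + X]big1 ?addr0.
      apply: mulf_neq0; first by apply: mulf_neq0; [exact: nat0 | exact: hv0].
      by apply/prodf_neq0 => i hij; exact: vv.
    move=> l hl; rewrite (bigD1 j) /=; last by rewrite eq_sym.
    by rewrite subrr mul0r mulr0.
  by rewrite -e su eqxx.
have uvn j : u - v j != 0 by rewrite subr_eq0 uv.
have PU : \prod_(i<k) (u - v i) != 0 by apply/prodf_neq0 => i _.
have Kn : \sum_(j<k) c j / (u - v j) = n%:R.
  have QP j : \prod_(i<k | i != j) (u - v i) = (\prod_(i<k) (u - v i)) / (u - v j).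
    by rewrite [in RHS](bigD1 j) //= mulrAC divff ?mul1r.
  move: su; rewrite hs [X in _ - X](eq_bigr (fun j => c j * (\prod_(i<k) (u - v i) / (u - v j)))); last by move=> j _; rewrite QP.
  move/eqP; rewrite subr_eq0 => /eqP h.
  apply: (mulIf PU); rewrite h mulr_suml; apply: eq_bigr => j _; ring.
pose zeta := 1 - u^-1.
have hzeta1 : zeta - 1 = - u^-1 by rewrite /zeta; ring.
have z1 : zeta - 1 != 0 by rewrite hzeta1 oppr_eq0 invr_eq0.
have zz j : zeta - z j = (v j)^-1 - u^-1 by rewrite /v invrK /zeta; ring.
have zne j : zeta - z j != 0.
  rewrite zz subr_eq0; apply/eqP => /invr_inj e; by move: (uv j); rewrite e eqxx.
have dX1 : ('X - 1 : {poly R[i]})^`() = 1 by rewrite derivB derivX -polyC1 derivC subr0.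
have hX1 : ('X - 1 : {poly R[i]}).[zeta] = zeta - 1 by rewrite -polyC1 hornerXsubC.
set B := \prod_(j < k) ('X - (z j)%:P) ^+ nn j.
have hp : (pol n z nn)^`().[zeta] = (zeta - 1)^+n.-1 * B.[zeta] *
    (n%:R + (zeta - 1) * \sum_(j<k) (nn j)%:R / (zeta - z j)).
  rewrite /pol -/B derivM hornerD !hornerM /B L1; last first.
    by move=> j; rewrite horner_exp hornerXsubC expf_neq0.
  rewrite -/B.
  rewrite (eq_bigr (fun j => (nn j)%:R / (zeta - z j))); last first.
    move=> j _; rewrite deriv_exp derivXsubC mul1r hornerMn !horner_exp hornerXsubC.
    have -> : (zeta - z j) ^+ nn j = (zeta - z j)^+(nn j).-1 * (zeta - z j) by rewrite -exprSr prednK.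
    rewrite -mulr_natr.
    field; rewrite ?expf_neq0 ?zne //.
  rewrite deriv_exp dX1 mul1r hornerMn !horner_exp hX1.
  have -> : (zeta - 1) ^+ n = (zeta - 1)^+n.-1 * (zeta - 1) by rewrite -exprSr prednK.
  rewrite -mulr_natr.
  ring.
have hsum : (zeta - 1) * \sum_(j<k) (nn j)%:R / (zeta - z j) = - \sum_(j<k) c j / (u - v j).
  rewrite mulr_sumr -sumrN; apply: eq_bigr => j _.
  rewrite hzeta1 zz /c.
  have := uvn j; have := hv0 j; have := u0; have := zne j; rewrite zz => h1 h2 h3 h4.
  field; rewrite ?h1 ?h2 ?h3 ?h4 //.
exists zeta; split.
  by rewrite -subr_eq0.
split.
  by rewrite hp hsum Kn subrr mulr0.
have em : (m - n)%N = N by rewrite /m addKn.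
have em2 : (m + (k - 1) * n)%N = D by rewrite /m /D; nia.
rewrite em em2.
pose r := ((k * n)%:R / D%:R : R).
have rpos : 0 < r by rewrite /r divr_gt0.
have hr : (k * n)%:R / D%:R = (r%:C)%C :> R[i] by rewrite /r Cnat.
have hc : N%:R / D%:R = 1 - (r%:C)%C :> R[i].
  rewrite -hr /D natrD; field; rewrite -natrM -natrD; exact: nat0.
rewrite hr hc.
have -> : zeta - (1 - (r%:C)%C) = (r%:C)%C - u^-1 by rewrite /zeta; ring.
apply: L4 => //.
have e : 2 * r * t = 1.
  by rewrite /r /t; field; rewrite !lt0r_neq0.
apply: le_trans (_ : 2 * r * t <= _); first by rewrite e.
apply: ler_wpM2l => //; rewrite mulr_ge0 // ltW //.
Qed.
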